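(* Let $\mathcal{X},\mathcal{Y}$ be finite, $P_X$ a distribution, $P_{Y|X}$ a channel, $P_{XY}=P_XP_{Y|X}$ with $\mathcal{Y}$-marginal $P_Y$, and $R>I(P_X,P_{Y|X})>0$. Define \[ \alpha(R,P_X,P_{Y|X})=\min_{Q_{XY}}\Big\{D(Q_{XY}\|P_{XY})+\tfrac12\big[R-D(Q_{XY}\|P_XQ_Y)\big]_+\Big\}, \] \[ \beta(R,P_X,P_{Y|X})=\max_{\lambda\ge0}\max_{\lambda'\le1}\Big\{\frac{\lambda}{2\lambda+1-\lambda'}\Big(R-(1-\lambda')D_{1+\lambda}(P_{XY}\|P_XP_Y)-\lambda'\widetilde D_{1+\lambda'}(P_{XY}\|P_XP_Y)\Big)\Big\}. \] Then $\alpha(R,P_X,P_{Y|X})\ge\beta(R,P_X,P_{Y|X})$.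
   Context: $Q_Y$ is the $\mathcal{Y}$-marginal of $Q_{XY}$, $[f]_+=\max\{0,f\}$, $D$ is relative entropy. With $(X,Y)\sim P_{XY}$ and information density $\imath_{X;Y}(x;y)=\log\frac{P_{Y|X}(y|x)}{P_Y(y)}$: $D_{1+\lambda}(P_{XY}\|P_XP_Y)=\frac1\lambda\log\mathbb{E}[\exp(\lambda\,\imath_{X;Y}(X;Y))]$ (the Rényi divergence of order $1+\lambda$; at $\lambda=0$ it equals the mutual information), and $\widetilde D_{1+\lambda'}(P_{XY}\|P_XP_Y)=\frac{2}{\lambda'}\log\mathbb{E}\big[\mathbb{E}^{1/2}[\exp(\lambda'\,\imath_{X;Y}(X;Y))\mid Y]\big]$, so that $\lambda'\widetilde D_{1+\lambda'}=2\log\mathbb{E}\big[\mathbb{E}^{1/2}[\exp(\lambda'\imath_{X;Y}(X;Y))|Y]\big]$. Logs and exps use a common base. *)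

(* Defs.v *)
From HB Require Import structures.
From mathcomp Require Import all_boot all_order all_algebra.
From mathcomp Require Import reals.
From mathcomp.analysis Require Import sequences exp.
Set Implicit Arguments. Unset Strict Implicit. Unset Printing Implicit Defensive.
Import Order.TTheory GRing.Theory Num.Theory.
Local Open Scope ring_scope.

Section InfoDefs.
Variables (R : realType) (X Y : finType).

(* relative entropy D(Q||P) on a finite set, with 0 log 0 = 0;
   only used when Q << P (support of Q inside support of P) *)
Definition relent (T : finType) (Q P : T -> R) : R :=
  \sum_(t | Q t != 0) Q t * ln (Q t / P t).

Definition PXY (PX : X -> R) (W : X -> Y -> R) (p : X * Y) : R :=
  PX p.1 * W p.1 p.2.

Definition margY (Q : X * Y -> R) (y : Y) : R := \sum_(x : X) Q (x, y).

Definition prodXY (PX : X -> R) (QY : Y -> R) (p : X * Y) : R := PX p.1 * QY p.2.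

Definition MI (PX : X -> R) (W : X -> Y -> R) : R :=
  relent (PXY PX W) (prodXY PX (margY (PXY PX W))).

Definition idens (PX : X -> R) (W : X -> Y -> R) (p : X * Y) : R :=
  ln (W p.1 p.2 / margY (PXY PX W) p.2).

Definition renyiD (PX : X -> R) (W : X -> Y -> R) (lam : R) : R :=
  if lam == 0 then MI PX W
  else ln (\sum_(p | PXY PX W p != 0) PXY PX W p * expR (lam * idens PX W p)) / lam.

(* lam' * Dtilde_{1+lam'}(P_XY || P_X P_Y)
   = 2 log E[ E^{1/2}[exp(lam' i(X;Y)) | Y] ] *)
Definition lamDtilde (PX : X -> R) (W : X -> Y -> R) (lam' : R) : R :=
  let PY := margY (PXY PX W) in
  2 * ln (\sum_(y | PY y != 0) PY y *
            Num.sqrt (\sum_(x | PXY PX W (x, y) != 0)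
                        PXY PX W (x, y) / PY y * expR (lam' * idens PX W (x, y)))).

Definition alpha_obj (PX : X -> R) (W : X -> Y -> R) (Rt : R) (Q : X * Y -> R) : R :=
  relent Q (PXY PX W)
  + 2^-1 * Num.max 0 (Rt - relent Q (prodXY PX (margY Q))).

Definition beta_obj (PX : X -> R) (W : X -> Y -> R) (Rt lam lam' : R) : R :=
  lam / (2 * lam + 1 - lam') *
  (Rt - (1 - lam') * renyiD PX W lam - lamDtilde PX W lam').

End InfoDefs.

(* Main.v *)
Require Import Defs.
From HB Require Import structures.
From mathcomp Require Import all_boot all_order all_algebra.
From mathcomp Require Import reals.
From mathcomp.analysis Require Import sequences exp.
From mathcomp Require Import lra ring.
Import Order.TTheory GRing.Theory Num.Theory.
Local Open Scope ring_scope.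

Section Aux.
Variable R : realType.

Lemma ln_le_sub1 (x : R) : 0 < x -> ln x <= x - 1.
Proof. move=> x0; have := @le_ln1Dx R (x - 1); rewrite addrCA subrr addr0; apply; lra. Qed.

Lemma sum_nz (T : finType) (q g : T -> R) :
  \sum_(t | q t != 0) q t * g t = \sum_t q t * g t.
Proof.
rewrite big_mkcond; apply: eq_bigr => t _; case: eqP => // ->; by rewrite mul0r.
Qed.

Lemma DV (T : finType) (q p f : T -> R) :
  (forall t, 0 <= q t) -> (forall t, 0 <= p t) -> (forall t, p t = 0 -> q t = 0) ->
  \sum_t q t * (f t - ln (q t / p t)) <=
  (\sum_t q t) * ln ((\sum_(t | p t != 0) p t * expR (f t)) / \sum_t q t).
Proof.
move=> q0 p0 qp.
set m := \sum_t q t; set S := \sum_(t | p t != 0) _.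
have m0 : 0 <= m by apply: sumr_ge0.
have [me0|mpos] := eqVneq m 0.
  have qz : forall t, q t = 0 by move=> t; apply: (psumr_eq0P (P := xpredT)) => // i _.
  by rewrite me0 mul0r big1 // => t _; rewrite qz mul0r.
have mg : 0 < m by rewrite lt_def mpos m0.
have [t0 qt0] : exists t, q t != 0.
  apply/existsP; apply: contraT; rewrite negb_exists => /forallP H.
  by move: mpos; rewrite /m big1 ?eqxx // => t _; apply/eqP; rewrite -[_ == _]negbK H.
have S0 : 0 < S.
  have pt0 : p t0 != 0 by apply/eqP => /qp /eqP; rewrite (negbTE qt0).
  rewrite /S (bigD1 t0) //=; apply: ltr_pwDl; last by apply: sumr_ge0 => t _; rewrite mulr_ge0 ?expR_ge0.
  by rewrite mulr_gt0 ?expR_gt0 // lt_def pt0 p0.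
rewrite /m mulr_suml -subr_le0 -sumrB.
apply: (@le_trans _ _ (\sum_t ((if p t != 0 then p t * expR (f t) else 0) * m / S - q t))).
  apply: ler_sum => t _.
  have [qe|qn] := eqVneq (q t) 0.
    rewrite qe !mul0r subr0 subr_ge0; case: ifP => _; last by rewrite !mul0r.
    by rewrite mulr_ge0 ?invr_ge0 ?mulr_ge0 ?expR_ge0 // ltW.
  have pn : p t != 0 by apply/eqP => /qp /eqP; rewrite (negbTE qn).
  have qg : 0 < q t by rewrite lt_def qn q0.
  have pg : 0 < p t by rewrite lt_def pn p0.
  rewrite pn -mulrBr.
  have -> : f t - ln (q t / p t) - ln (S / m) = ln (expR (f t) / (q t / p t) / (S / m)).
    rewrite !ln_div ?expRK ?posrE ?divr_gt0 ?expR_gt0 //.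
  apply: (@le_trans _ _ (q t * (expR (f t) / (q t / p t) / (S / m) - 1))).
    apply: ler_wpM2l; first exact: ltW; apply: ln_le_sub1; by rewrite ?divr_gt0 ?expR_gt0.
  rewrite le_eqVlt; apply/orP; left; apply/eqP; field.
  by rewrite qn pn (gt_eqF S0) mpos.
rewrite sumrB -/m.
rewrite -mulr_suml -mulr_suml -big_mkcond -/S.
by rewrite mulrAC divff ?mul1r ?subrr // gt_eqF.
Qed.

End Aux.

Section Aux2.
Variable R : realType.

Lemma exists_nz (T : finType) (F : T -> R) : \sum_t F t != 0 -> exists t, F t != 0.
Proof.
move=> H; apply/existsP; apply: contraT; rewrite negb_exists => /forallP H2.
by move: H; rewrite big1 ?eqxx // => t _; apply/eqP; rewrite -[_ == _]negbK H2.
Qed.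

Lemma le_sum1 (T : finType) (F : T -> R) t : (forall t, 0 <= F t) -> F t <= \sum_t F t.
Proof.
move=> F0; rewrite (bigD1 t) //= -{1}[F t]addr0 lerD2l; exact: sumr_ge0.
Qed.

Lemma sum_pairY (X Y : finType) (F : X * Y -> R) :
  \sum_p F p = \sum_y \sum_x F (x, y).
Proof.
rewrite exchange_big pair_bigA /=; apply: eq_bigr; by case.
Qed.

End Aux2.

Theorem proposition3 (R : realType) (X Y : finType)
  (PX : X -> R) (W : X -> Y -> R) (Rt : R) :
  (forall x, 0 <= PX x) -> \sum_(x : X) PX x = 1 ->
  (forall x y, 0 <= W x y) -> (forall x, \sum_(y : Y) W x y = 1) ->
  0 < MI PX W -> MI PX W < Rt ->
  (* alpha >= beta : every value in the min is >= every value in the max *)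
  forall Q : X * Y -> R,
    (forall p, 0 <= Q p) -> \sum_(p : X * Y) Q p = 1 ->
    (forall p, PXY PX W p = 0 -> Q p = 0) ->
  forall lam lam' : R, 0 <= lam -> lam' <= 1 ->
    beta_obj PX W Rt lam lam' <= alpha_obj PX W Rt Q.
Proof.
move=> PX0 PX1 W0 W1 _ _ Q Q0 Q1 QP lam lam' lam0 lam'1.
set P := PXY PX W.
have P0 : forall p, 0 <= P p by move=> p; rewrite /P /PXY mulr_ge0.
have P1 : \sum_p P p = 1.
  rewrite -PX1 -(pair_bigA _ (fun x y => PX x * W x y)) /=.
  by apply: eq_bigr => x _; rewrite -mulr_sumr W1 mulr1.
set PY := margY P.
set QY := margY Q.
set i := idens PX W.
have PY0 : forall y, 0 <= PY y by move=> y; apply: sumr_ge0.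
have QY0 : forall y, 0 <= QY y by move=> y; apply: sumr_ge0.
have QY1 : \sum_y QY y = 1 by rewrite -Q1 sum_pairY.
have QPY : forall y, PY y = 0 -> QY y = 0.
  move=> y /eqP; apply: contraTeq => /exists_nz [x Qx].
  have Pg : 0 < P (x, y).
    by rewrite lt_def P0 andbT; apply: contra Qx => /eqP /QP ->.
  rewrite gt_eqF //; apply: (lt_le_trans Pg); rewrite /PY /margY; exact: (@le_sum1 R X (fun x => P (x, y)) x (fun x => P0 _)).
set D := \sum_p Q p * ln (Q p / P p).
set E := \sum_p Q p * i p.
set DY := \sum_y QY y * ln (QY y / PY y).
have D0 : 0 <= D.
  have := @DV R _ Q P (fun _ => 0) Q0 P0 QP.
  rewrite /= Q1 mul1r divr1 expR0 sum_nz.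
  under [X in ln X]eq_bigr do rewrite mulr1; rewrite P1 ln1.
  under eq_bigr do rewrite sub0r mulrN.
  by rewrite sumrN oppr_le0.
have Ppos : forall p, Q p != 0 -> 0 < P p.
  move=> p Qp; rewrite lt_def P0 andbT; apply: contra Qp => /eqP /QP ->; by [].
have PYpos : forall x y, 0 < P (x, y) -> 0 < PY y.
  move=> x y Pg; apply: (lt_le_trans Pg).
  rewrite /PY /margY; exact: (@le_sum1 R X (fun x => P (x, y)) x (fun x => P0 _)).
have QYpos : forall x y, 0 < Q (x, y) -> 0 < QY y.
  move=> x y Pg; apply: (lt_le_trans Pg).
  rewrite /QY /margY; exact: (@le_sum1 R X (fun x => Q (x, y)) x (fun x => Q0 _)).
set L1 := ln (\sum_(p | P p != 0) P p * expR (lam * i p)).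
have I1 : lam * E - D <= L1.
  have := @DV R _ Q P (fun p => lam * i p) Q0 P0 QP.
  rewrite /= Q1 mul1r divr1 -/L1; apply: le_trans.
  rewrite /E /D mulr_sumr -sumrB le_eqVlt; apply/orP; left; apply/eqP.
  by apply: eq_bigr => p _; ring.
have HD2 : relent Q (prodXY PX QY) = D + E - DY.
  rewrite /relent sum_nz.
  have -> : DY = \sum_p Q p * ln (QY p.2 / PY p.2).
    rewrite sum_pairY /DY; apply: eq_bigr => y _ /=; rewrite /QY /margY mulr_suml //.
  rewrite /D /E -big_split -sumrB /=; apply: eq_bigr => p _.
  have [->|Qn] := eqVneq (Q p) 0; first by rewrite !mul0r; ring.
  have Qg : 0 < Q p by rewrite lt_def Qn Q0.
  have Pg := Ppos p Qn.
  move: p Qn Qg Pg => [x y] Qn Qg Pg /=.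
  have PYg := PYpos x y Pg.
  have QYg := QYpos x y Qg.
  have PXg : 0 < PX x.
    rewrite lt_def PX0 andbT; apply/eqP => h; move: Pg; by rewrite /P /PXY /= h mul0r ltxx.
  have Wg : 0 < W x y.
    rewrite lt_def W0 andbT; apply/eqP => h; move: Pg; by rewrite /P /PXY /= h mulr0 ltxx.
  rewrite /i /idens /= /prodXY /=.
  rewrite !ln_div ?posrE ?mulr_gt0 // lnM ?posrE //.
  rewrite /P /PXY /= lnM ?posrE //; ring.
pose S y := \sum_(x | P (x, y) != 0) P (x, y) * expR (lam' * i (x, y)).
pose g y := \sum_(x | P (x, y) != 0) P (x, y) / PY y * expR (lam' * i (x, y)).
pose h y := ln (Num.sqrt (g y)).
set L2h := ln (\sum_(y | PY y != 0) PY y * Num.sqrt (g y)).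
have HL2 : lamDtilde PX W lam' = 2 * L2h by [].
have gS : forall y, g y = S y / PY y.
  move=> y; rewrite /g /S mulr_suml; apply: eq_bigr => x _; by rewrite mulrAC.
have Spos : forall x y, 0 < P (x, y) -> 0 < S y.
  move=> x y Pg; rewrite /S (bigD1 x) ?gt_eqF //=; apply: ltr_pwDl.
    by rewrite mulr_gt0 ?expR_gt0.
  by apply: sumr_ge0 => t _; rewrite mulr_ge0 ?expR_ge0.
have gpos : forall y, PY y != 0 -> 0 < g y.
  move=> y /exists_nz [x Pn]; have Pg : 0 < P (x, y) by rewrite lt_def Pn P0.
  by rewrite gS divr_gt0 // ?(Spos x) ?(PYpos x).
have I2a : lam' * E - D <= \sum_y QY y * ln (S y / QY y).
  have -> : lam' * E - D = \sum_y \sum_x Q (x, y) * (lam' * i (x, y) - ln (Q (x, y) / P (x, y))).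
    rewrite /E /D mulr_sumr -sumrB sum_pairY; apply: eq_bigr => y _; apply: eq_bigr => x _; ring.
  apply: ler_sum => y _.
  have := @DV R _ (fun x => Q (x, y)) (fun x => P (x, y)) (fun x => lam' * i (x, y))
     (fun x => Q0 _) (fun x => P0 _) (fun x => QP (x, y)).
  by [].
have I2b : \sum_y QY y * ln (S y / QY y) = 2 * (\sum_y QY y * h y) - DY.
  rewrite /DY mulr_sumr -sumrB; apply: eq_bigr => y _.
  have [->|QYn] := eqVneq (QY y) 0; first by rewrite !mul0r; ring.
  have [x Qn] := @exists_nz R X (fun x => Q (x, y)) QYn.
  have Qg : 0 < Q (x, y) by rewrite lt_def Qn Q0.
  have Pg := Ppos _ Qn.
  have PYg := PYpos x y Pg.
  have QYg := QYpos x y Qg.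
  have Sg := Spos x y Pg.
  have gg : 0 < g y by apply: gpos; rewrite gt_eqF.
  have -> : h y = 2^-1 * ln (g y).
    by rewrite /h -{2}(sqr_sqrtr (ltW gg)) lnXn ?sqrtr_gt0 // mulr2n; field.
  by rewrite gS !ln_div ?posrE ?divr_gt0 //; field.
have I2c : \sum_y QY y * h y - DY <= L2h.
  have := @DV R _ QY PY h QY0 PY0 QPY.
  rewrite QY1 mul1r divr1 /L2h.
  have -> : \sum_(t | PY t != 0) PY t * expR (h t) = \sum_(y | PY y != 0) PY y * Num.sqrt (g y).
    apply: eq_bigr => z Pn; rewrite /h lnK // posrE sqrtr_gt0; exact: gpos.
  apply: le_trans; rewrite /DY -sumrB le_eqVlt; apply/orP; left; apply/eqP.
  by apply: eq_bigr => z _; ring.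
have I2 : lam' * E - D - DY <= 2 * L2h.
  rewrite I2b in I2a; lra.
have hDrel : relent Q P = D by rewrite /relent sum_nz.
set M := Num.max 0 (Rt - (D + E - DY)).
have hM0 : 0 <= M by rewrite le_max lexx.
have hMt : Rt - (D + E - DY) <= M by rewrite le_max lexx orbT.
have -> : alpha_obj PX W Rt Q = D + 2^-1 * M by rewrite /alpha_obj hDrel HD2.
have [lamz|lamn] := eqVneq lam 0.
  by rewrite /beta_obj lamz !mul0r; apply: addr_ge0 => //; apply: mulr_ge0 => //; rewrite invr_ge0.
have lamg : 0 < lam by rewrite lt_def lamn lam0.
have HR : renyiD PX W lam = L1 / lam by rewrite /renyiD (negbTE lamn).
have cg : 0 < 2 * lam + 1 - lam' by lra.
rewrite /beta_obj HR HL2.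
have -> : lam / (2 * lam + 1 - lam') * (Rt - (1 - lam') * (L1 / lam) - 2 * L2h)
   = (lam * Rt - (1 - lam') * L1 - 2 * lam * L2h) / (2 * lam + 1 - lam').
  by field; rewrite lamn gt_eqF.
rewrite ler_pdivrMr //.
have h1 : 0 <= (1 - lam') * (L1 - lam * E + D) by apply: mulr_ge0; lra.
have h2 : 0 <= lam * (2 * L2h + DY - lam' * E + D) by apply: mulr_ge0; lra.
have h3 : 0 <= (1 - lam') * M by apply: mulr_ge0; lra.
have h4 : 0 <= lam * (M - (Rt - (D + E - DY))) by apply: mulr_ge0; lra.
nra.
Qed.
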